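(* For all contexts $\Gamma,\Delta$ and terms $M,A,B$: if $\Gamma\approx_\alpha\Delta$, $A\sim_\alpha B$ and $\Gamma\vdash M:A$, then $\Delta\vdash M:B$.
   Context: Let $\mathcal V$ (the variables) be a type with decidable equality, equipped with functions $\mathrm{encode}:\mathcal V\to\mathbb N$ and $\mathrm{decode}:\mathbb N\to\mathcal V$ such that $\mathrm{encode}(\mathrm{decode}\,n)=n$ for all $n$. Let $\mathcal C$ (the constants) be any type. Terms $\Lambda$ are generated by: $c\,k$ ($k\in\mathcal C$), $v\,x$ ($x\in\mathcal V$), $\lambda[x:A]M$, $\Pi[x:A]B$ and $M\cdot N$; in $\lambda[x:A]M$ and $\Pi[x:A]B$ the name $x$ binds in $M$ (resp. $B$) but not in $A$. Terms are raw first-order syntax (not identified up to renaming of bound variables) and $\equiv$ denotes syntactic identity. The list of free variables is $\mathrm{fv}(c\,k)=[\,]$, $\mathrm{fv}(v\,x)=[x]$, $\mathrm{fv}(\lambda[x:A]M)=\mathrm{fv}\,A\mathbin{+\!\!+}(\mathrm{fv}\,M-x)$, $\mathrm{fv}(\Pi[x:A]B)=\mathrm{fv}\,A\mathbin{+\!\!+}(\mathrm{fv}\,B-x)$, $\mathrm{fv}(M\cdot N)=\mathrm{fv}\,M\mathbin{+\!\!+}\mathrm{fv}\,N$, where $\mathbin{+\!\!+}$ is list concatenation and $xs-x$ deletes every occurrence of $x$ from $xs$. Fix a function $\chi':\mathrm{List}\,\mathbb N\to\mathbb N$ with $\chi'(ns)\notin ns$ for every list $ns$, and put $X'(xs)=\mathrm{decode}(\chi'(\mathrm{map}\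 \mathrm{encode}\ xs))$. A substitution is any function $\sigma:\mathcal V\to\Lambda$; $\iota=v$ is the identity substitution; $(\sigma,x:=N)(y)=N$ if $y=x$ and $\sigma\,y$ otherwise. For a substitution $\sigma$ and a list $xs$ of variables, $X(\sigma,xs)=X'(\text{concatenation of the lists }\mathrm{fv}(\sigma\,y)\text{ for }y\in xs)$. The action $M\bullet\sigma$ is defined by structural recursion: $c\,k\bullet\sigma=c\,k$; $v\,x\bullet\sigma=\sigma\,x$; $(M\cdot N)\bullet\sigma=(M\bullet\sigma)\cdot(N\bullet\sigma)$; $(\lambda[x:A]M)\bullet\sigma=\lambda[y:A\bullet\sigma](M\bullet(\sigma,x:=v\,y))$ with $y=X(\sigma,\mathrm{fv}\,M-x)$; $(\Pi[x:A]B)\bullet\sigma=\Pi[y:A\bullet\sigma](B\bullet(\sigma,x:=v\,y))$ with $y=X(\sigma,\mathrm{fv}\,B-x)$. Unary substitution is $M[x:=N]=M\bullet(\iota,x:=N)$. $\alpha$-conversion $\sim_\alpha$ is the inductively defined relation with rules: $c\,k\sim_\alpha c\,k$; $v\,x\sim_\alpha v\,x$; $M\cdot N\sim_\alpha M'\cdot N'$ if $M\sim_\alpha M'$ and $N\sim_\alpha N'$; $\lambda[x:A]M\sim_\alpha\lambda[x':A']M'$ if $A\sim_\alpha A'$ and there is a variable $y$ with $y\notin\mathrm{fv}\,M-x$, $y\notin\mathrm{fv}\,M'-x'$ and $M[x:=v\,y]\equiv M'[x':=v\,y]$; and the same rule with $\Pi$ in place of $\lambda$. $\beta$-contraction is $(\lambda[x:A]M)\cdot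 N\ \triangleright_\beta\ M[x:=N]$. One-step $\beta$-reduction $\to_\beta$ is its contextual closure, inductively: $M\to_\beta N$ if $M\triangleright_\beta N$; $\lambda[x:A]M\to_\beta\lambda[x:A]M'$ and $\Pi[x:A]M\to_\beta\Pi[x:A]M'$ if $M\to_\beta M'$; $\lambda[x:A]M\to_\beta\lambda[x:A']M$ and $\Pi[x:A]M\to_\beta\Pi[x:A']M$ if $A\to_\beta A'$; $M\cdot P\to_\beta N\cdot P$ and $P\cdot M\to_\beta P\cdot N$ if $M\to_\beta N$. $\beta$-conversion $\simeq_\beta$ is the equivalence (reflexive–symmetric–transitive) closure of $\sim_\alpha\cup\to_\beta$. Pure Type System: fix a binary relation $\mathcal A\subseteq\mathcal C\times\mathcal C$ (axioms) and a ternary relation $\mathcal R\subseteq\mathcal C\times\mathcal C\times\mathcal C$ (rules). A context is a finite list of pairs $(x,A)$ with $x\in\mathcal V$, $A\in\Lambda$; $\Gamma,x:A$ denotes the list $(x,A)::\Gamma$; $\mathrm{dom}\,\Gamma$ is the list of first components; $(x,A)\in\Gamma$ is list membership. The judgments $\Gamma\ \mathrm{ok}$ and $\Gamma\vdash M:A$ are defined mutually inductively by: (nil) $[\,]\ \mathrm{ok}$; (cons) if $\Gamma\ \mathrm{ok}$, $\Gamma\vdash A:c\,s$ and $x\notin\mathrm{dom}\,\Gamma$ then $\Gamma,x:A\ \mathrm{ok}$; (sort) if $\Gamma\ \mathrm{ok}$ and $\mathcal A\,s_1\,s_2$ then $\Gamma\vdash c\,s_1:c\,s_2$; (var) if $\Gamma\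 \mathrm{ok}$ and $(x,A)\in\Gamma$ then $\Gamma\vdash v\,x:A$; (prod) if $\mathcal R\,s_1\,s_2\,s_3$, $\Gamma\vdash A:c\,s_1$ and for every $y\notin\mathrm{dom}\,\Gamma$, $\Gamma,y:A\vdash B[x:=v\,y]:c\,s_2$, then $\Gamma\vdash\Pi[x:A]B:c\,s_3$; (abs) if $\mathcal R\,s_1\,s_2\,s_3$, $\Gamma\vdash A:c\,s_1$, for every $z\notin\mathrm{dom}\,\Gamma$, $\Gamma,z:A\vdash B[y:=v\,z]:c\,s_2$, and for every $z\notin\mathrm{dom}\,\Gamma$, $\Gamma,z:A\vdash M[x:=v\,z]:B[y:=v\,z]$, then $\Gamma\vdash\lambda[x:A]M:\Pi[y:A]B$; (app) if $\Gamma\vdash M:\Pi[x:A]B$, $\Gamma\vdash N:A$ and $\Gamma\vdash B[x:=N]:c\,s$ for some $s$, then $\Gamma\vdash M\cdot N:B[x:=N]$; (conv) if $\Gamma\vdash M:A$, $A\simeq_\beta B$ and $\Gamma\vdash B:c\,s$ for some $s$, then $\Gamma\vdash M:B$. (The premises quantified over all fresh names in (prod) and (abs) are infinitely branching.) $\Gamma\approx_\alpha\Delta$ means: $\Gamma$ and $\Delta$ have the same length and, position by position, the entries $(x,A)$ of $\Gamma$ and $(y,B)$ of $\Delta$ satisfy $x=y$ and $A\sim_\alpha B$. *)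

(* Defs.v *)
From Stdlib Require Import List Relations.
Import ListNotations.
Set Implicit Arguments.

Record Vars := {
  var :> Type;
  var_eq_dec : forall x y : var, {x = y} + {x <> y};
  encode : var -> nat;
  decode : nat -> var;
  encode_decode : forall n, encode (decode n) = n;
  chi' : list nat -> nat;
  chi'_fresh : forall ns, ~ In (chi' ns) ns
}.

Inductive term (V : Vars) (C : Type) : Type :=
| tc : C -> term V C
| tv : V -> term V C
| tlam : V -> term V C -> term V C -> term V C
| tpi : V -> term V C -> term V C -> term V C
| tapp : term V C -> term V C -> term V C.

Arguments tc {V C} _.
Arguments tv {V C} _.
Arguments tlam {V C} _ _ _.
Arguments tpi {V C} _ _ _.
Arguments tapp {V C} _ _.

Section Syntax.
Context {V : Vars} {C : Type}.

Definition del (xs : list V) (x : V) : list V := remove (var_eq_dec V) x xs.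

Fixpoint fv (M : term V C) : list V :=
  match M with
  | tc _ => []
  | tv x => [x]
  | tlam x A M => fv A ++ del (fv M) x
  | tpi x A B => fv A ++ del (fv B) x
  | tapp M N => fv M ++ fv N
  end.

Definition X' (xs : list V) : V := decode V (chi' V (map (encode V) xs)).

Definition subst_t := V -> term V C.

Definition iota : subst_t := fun x => tv x.

Definition upd (s : subst_t) (x : V) (N : term V C) : subst_t :=
  fun y => if var_eq_dec V y x then N else s y.

Definition Xs (s : subst_t) (xs : list V) : V :=
  X' (flat_map (fun y => fv (s y)) xs).

Fixpoint act (M : term V C) (s : subst_t) : term V C :=
  match M with
  | tc k => tc k
  | tv x => s x
  | tapp M N => tapp (act M s) (act N s)
  | tlam x A M =>
      let y := Xs s (del (fv M) x) in
      tlam y (act A s) (act M (upd s x (tv y)))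
  | tpi x A B =>
      let y := Xs s (del (fv B) x) in
      tpi y (act A s) (act B (upd s x (tv y)))
  end.

Definition usubst (M : term V C) (x : V) (N : term V C) : term V C :=
  act M (upd iota x N).

Inductive alpha : term V C -> term V C -> Prop :=
| alpha_c : forall k, alpha (tc k) (tc k)
| alpha_v : forall x, alpha (tv x) (tv x)
| alpha_app : forall M N M' N', alpha M M' -> alpha N N' ->
    alpha (tapp M N) (tapp M' N')
| alpha_lam : forall x A M x' A' M' y, alpha A A' ->
    ~ In y (del (fv M) x) -> ~ In y (del (fv M') x') ->
    usubst M x (tv y) = usubst M' x' (tv y) ->
    alpha (tlam x A M) (tlam x' A' M')
| alpha_pi : forall x A M x' A' M' y, alpha A A' ->
    ~ In y (del (fv M) x) -> ~ In y (del (fv M') x') ->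
    usubst M x (tv y) = usubst M' x' (tv y) ->
    alpha (tpi x A M) (tpi x' A' M').

Inductive beta_contr : term V C -> term V C -> Prop :=
| beta_c : forall x A M N, beta_contr (tapp (tlam x A M) N) (usubst M x N).

Inductive beta : term V C -> term V C -> Prop :=
| beta_top : forall M N, beta_contr M N -> beta M N
| beta_lam_body : forall x A M M', beta M M' -> beta (tlam x A M) (tlam x A M')
| beta_pi_body : forall x A M M', beta M M' -> beta (tpi x A M) (tpi x A M')
| beta_lam_dom : forall x A A' M, beta A A' -> beta (tlam x A M) (tlam x A' M)
| beta_pi_dom : forall x A A' M, beta A A' -> beta (tpi x A M) (tpi x A' M)
| beta_appl : forall M N P, beta M N -> beta (tapp M P) (tapp N P)
| beta_appr : forall M N P, beta M N -> beta (tapp P M) (tapp P N).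

Definition alpha_or_beta (M N : term V C) : Prop := alpha M N \/ beta M N.

Definition beta_conv : term V C -> term V C -> Prop :=
  clos_refl_sym_trans (term V C) alpha_or_beta.

Definition context := list (V * term V C).

Definition dom (G : context) : list V := map fst G.

Definition alpha_ctx (G D : context) : Prop :=
  Forall2 (fun p q => fst p = fst q /\ alpha (snd p) (snd q)) G D.

End Syntax.

Section PTS.
Context {V : Vars} {C : Type}.
Variable Ax : C -> C -> Prop.
Variable Rl : C -> C -> C -> Prop.

Inductive wf : @context V C -> Prop :=
| wf_nil : wf []
| wf_cons : forall G x A s, wf G -> typ G A (tc s) -> ~ In x (dom G) ->
    wf ((x, A) :: G)
with typ : @context V C -> term V C -> term V C -> Prop :=
| typ_sort : forall G s1 s2, wf G -> Ax s1 s2 -> typ G (tc s1) (tc s2)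
| typ_var : forall G x A, wf G -> In (x, A) G -> typ G (tv x) A
| typ_prod : forall G x A B s1 s2 s3, Rl s1 s2 s3 -> typ G A (tc s1) ->
    (forall y, ~ In y (dom G) -> typ ((y, A) :: G) (usubst B x (tv y)) (tc s2)) ->
    typ G (tpi x A B) (tc s3)
| typ_abs : forall G x y A B M s1 s2 s3, Rl s1 s2 s3 -> typ G A (tc s1) ->
    (forall z, ~ In z (dom G) -> typ ((z, A) :: G) (usubst B y (tv z)) (tc s2)) ->
    (forall z, ~ In z (dom G) ->
       typ ((z, A) :: G) (usubst M x (tv z)) (usubst B y (tv z))) ->
    typ G (tlam x A M) (tpi y A B)
| typ_app : forall G M N x A B s, typ G M (tpi x A B) -> typ G N A ->
    typ G (usubst B x N) (tc s) -> typ G (tapp M N) (usubst B x N)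
| typ_conv : forall G M A B s, typ G M A -> beta_conv A B -> typ G B (tc s) ->
    typ G M B.

End PTS.

(* Main.v *)
Require Import Defs.
From Stdlib Require Import List Relations.
Import ListNotations.

Section Lemmas.
Context {V : Vars} {C : Type}.
Notation tm := (term V C).

Lemma X'_fresh (xs : list V) : ~ In (X' xs) xs.
Proof.
  unfold X'. intro H. pose proof (in_map (encode V) _ _ H) as H1.
  rewrite encode_decode in H1. exact (chi'_fresh V _ H1).
Qed.

Lemma Xs_fresh (s : V -> tm) (L : list V) v : In v L -> ~ In (Xs s L) (fv (s v)).
Proof.
  intros Hv H. apply (X'_fresh (flat_map (fun y => fv (s y)) L)).
  apply in_flat_map. exists v; auto.
Qed.

Lemma fm_ext_in {A B} (f g : A -> list B) l :
  (forall x, In x l -> f x = g x) -> flat_map f l = flat_map g l.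
Proof.
  induction l; simpl; intros H; auto. rewrite H, IHl; auto.
Qed.

Lemma fm_fm {A B D} (f : B -> list D) (g : A -> list B) l :
  flat_map f (flat_map g l) = flat_map (fun x => flat_map f (g x)) l.
Proof.
  induction l; simpl; auto. rewrite flat_map_app, IHl; auto.
Qed.

Lemma fm_single {A} (l : list A) : flat_map (fun v => [v]) l = l.
Proof. induction l; simpl; congruence. Qed.

Lemma del_fm (f : V -> list V) (x y : V) (L : list V) :
  f x = [y] -> (forall v, In v L -> v <> x -> ~ In y (f v)) ->
  del (flat_map f L) y = flat_map f (del L x).
Proof.
  intros Hx. induction L as [|a L IH]; intros H; simpl; auto.
  unfold del in *. rewrite remove_app. simpl.
  destruct (var_eq_dec V x a) as [e|n].
  - subst a. rewrite Hx. simpl. destruct (var_eq_dec V y y); [|congruence].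
    simpl. apply IH. intros; apply H; simpl; auto.
  - destruct (var_eq_dec V a x); [congruence|]. simpl.
    rewrite notin_remove. f_equal. apply IH. intros; apply H; simpl; auto.
    apply H; simpl; auto.
Qed.

Lemma act_ext_fv : forall (M : tm) (s s' : V -> tm),
  (forall v, In v (fv M) -> s v = s' v) -> act M s = act M s'.
Proof.
  induction M as [k|x|x A IHA M IHM|x A IHA M IHM|M IHM N IHN];
    intros s s' H; simpl in *; auto.
  - assert (Hy : Xs s (del (fv M) x) = Xs s' (del (fv M) x)).
    { unfold Xs. f_equal. apply fm_ext_in. intros v Hv. f_equal. apply H.
      apply in_or_app. auto. }
    rewrite Hy. f_equal; [apply IHA|apply IHM]; intros v Hv.
    + apply H. apply in_or_app; auto.
    + unfold upd. destruct (var_eq_dec V v x); auto. apply H. apply in_or_app; right.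
      apply in_in_remove; auto.
  - assert (Hy : Xs s (del (fv M) x) = Xs s' (del (fv M) x)).
    { unfold Xs. f_equal. apply fm_ext_in. intros v Hv. f_equal. apply H.
      apply in_or_app. auto. }
    rewrite Hy. f_equal; [apply IHA|apply IHM]; intros v Hv.
    + apply H. apply in_or_app; auto.
    + unfold upd. destruct (var_eq_dec V v x); auto. apply H. apply in_or_app; right.
      apply in_in_remove; auto.
  - f_equal; [apply IHM|apply IHN]; intros; apply H; apply in_or_app; auto.
Qed.

Lemma fv_binder (M : tm) (s : V -> tm) x :
  (forall s, fv (act M s) = flat_map (fun v => fv (s v)) (fv M)) ->
  del (fv (act M (upd s x (tv (Xs s (del (fv M) x)))))) (Xs s (del (fv M) x))
  = flat_map (fun v => fv (s v)) (del (fv M) x).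
Proof.
  intros IH. rewrite IH.
  rewrite (del_fm (fun v => fv (upd s x (tv (Xs s (del (fv M) x))) v)) x).
  - apply fm_ext_in. intros v Hv. apply in_remove in Hv. destruct Hv.
    unfold upd. destruct (var_eq_dec V v x); congruence.
  - unfold upd. destruct (var_eq_dec V x x); [reflexivity|congruence].
  - intros v Hv Hn. unfold upd. destruct (var_eq_dec V v x); [congruence|].
    apply Xs_fresh. apply in_in_remove; auto.
Qed.

Lemma fv_act : forall (M : tm) (s : V -> tm),
  fv (act M s) = flat_map (fun v => fv (s v)) (fv M).
Proof.
  induction M as [k|x|x A IHA M IHM|x A IHA M IHM|M IHM N IHN];
    intros s; simpl; auto.
  - rewrite app_nil_r; auto.
  - rewrite flat_map_app, IHA. f_equal. apply fv_binder; auto.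
  - rewrite flat_map_app, IHA. f_equal. apply fv_binder; auto.
  - rewrite flat_map_app, IHM, IHN; auto.
Qed.

Lemma act_comp : forall (M : tm) (s t : V -> tm),
  act (act M s) t = act M (fun v => act (s v) t).
Proof.
  induction M as [k|x|x A IHA M IHM|x A IHA M IHM|M IHM N IHN];
    intros s t; simpl; auto.
  - set (y := Xs s (del (fv M) x)).
    set (w := Xs t (del (fv (act M (upd s x (tv y)))) y)).
    assert (Hw : w = Xs (fun v => act (s v) t) (del (fv M) x)).
    { unfold w, y. rewrite fv_binder by (intros; apply fv_act). unfold Xs.
      rewrite fm_fm. f_equal. apply flat_map_ext. intro a. rewrite fv_act. reflexivity. }
    rewrite <- Hw. f_equal. apply IHA. rewrite IHM. apply act_ext_fv.
    intros v Hv. unfold upd at 1 3. destruct (var_eq_dec V v x).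
    + simpl. unfold upd. destruct (var_eq_dec V y y); congruence.
    + apply act_ext_fv. intros u Hu. unfold upd.
      destruct (var_eq_dec V u y); auto. subst u. exfalso.
      apply (Xs_fresh s (del (fv M) x) v); auto. apply in_in_remove; auto.
  - set (y := Xs s (del (fv M) x)).
    set (w := Xs t (del (fv (act M (upd s x (tv y)))) y)).
    assert (Hw : w = Xs (fun v => act (s v) t) (del (fv M) x)).
    { unfold w, y. rewrite fv_binder by (intros; apply fv_act). unfold Xs.
      rewrite fm_fm. f_equal. apply flat_map_ext. intro a. rewrite fv_act. reflexivity. }
    rewrite <- Hw. f_equal. apply IHA. rewrite IHM. apply act_ext_fv.
    intros v Hv. unfold upd at 1 3. destruct (var_eq_dec V v x).
    + simpl. unfold upd. destruct (var_eq_dec V y y); congruence.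
    + apply act_ext_fv. intros u Hu. unfold upd.
      destruct (var_eq_dec V u y); auto. subst u. exfalso.
      apply (Xs_fresh s (del (fv M) x) v); auto. apply in_in_remove; auto.
  - rewrite IHM, IHN; auto.
Qed.


Lemma rename_act (M : tm) x y (s : V -> tm) P :
  ~ In y (del (fv M) x) ->
  act (act M (upd iota x (tv y))) (upd s y P) = act M (upd s x P).
Proof.
  intros Hy. rewrite act_comp. apply act_ext_fv. intros v Hv.
  unfold upd at 1 3. destruct (var_eq_dec V v x).
  - simpl. unfold upd. destruct (var_eq_dec V y y); congruence.
  - unfold iota. simpl. unfold upd. destruct (var_eq_dec V v y); auto.
    subst v. exfalso. apply Hy. apply in_in_remove; auto.
Qed.

Lemma fv_rename (M : tm) x y :
  ~ In y (del (fv M) x) -> del (fv (usubst M x (tv y))) y = del (fv M) x.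
Proof.
  intros Hy. unfold usubst. rewrite fv_act.
  rewrite (del_fm (fun v => fv (upd iota x (tv y) v)) x).
  - rewrite <- (fm_single (del (fv M) x)) at 2. apply fm_ext_in. intros v Hv.
    apply in_remove in Hv. destruct Hv. unfold upd.
    destruct (var_eq_dec V v x); [congruence|reflexivity].
  - unfold upd. destruct (var_eq_dec V x x); [reflexivity|congruence].
  - intros v Hv Hn. unfold upd. destruct (var_eq_dec V v x); [congruence|].
    simpl. intros [e|[]]. subst. apply Hy. apply in_in_remove; auto.
Qed.

Lemma alpha_act : forall (M N : tm), alpha M N -> forall s, act M s = act N s.
Proof.
  induction 1; intros s; simpl; auto.
  - rewrite IHalpha1, IHalpha2; auto.
  - rewrite <- (fv_rename M x y), <- (fv_rename M' x' y), H2 by auto.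
    rewrite (fv_rename M' x' y) by auto.
    rewrite IHalpha. f_equal.
    rewrite <- (rename_act M x y s) by auto. rewrite <- (rename_act M' x' y s) by auto.
    unfold usubst in H2. rewrite H2. reflexivity.
  - rewrite <- (fv_rename M x y), <- (fv_rename M' x' y), H2 by auto.
    rewrite (fv_rename M' x' y) by auto.
    rewrite IHalpha. f_equal.
    rewrite <- (rename_act M x y s) by auto. rewrite <- (rename_act M' x' y s) by auto.
    unfold usubst in H2. rewrite H2. reflexivity.
Qed.

Lemma act_iota_fv (M : tm) : fv (act M iota) = fv M.
Proof. rewrite fv_act. apply fm_single. Qed.

Lemma alpha_fv (M N : tm) : alpha M N -> fv M = fv N.
Proof.
  intros H. rewrite <- (act_iota_fv M), <- (act_iota_fv N). f_equal. apply alpha_act; auto.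
Qed.

Lemma alpha_refl : forall (M : tm), alpha M M.
Proof.
  induction M; try constructor; auto.
  - apply alpha_lam with (y := X' (del (fv M2) v)); auto; apply X'_fresh.
  - apply alpha_pi with (y := X' (del (fv M2) v)); auto; apply X'_fresh.
Qed.

Lemma usubst_all (M M' : tm) x x' y :
  ~ In y (del (fv M) x) -> ~ In y (del (fv M') x') ->
  usubst M x (tv y) = usubst M' x' (tv y) ->
  forall N, usubst M x N = usubst M' x' N.
Proof.
  intros H1 H2 E N. unfold usubst.
  rewrite <- (rename_act M x y iota N), <- (rename_act M' x' y iota N) by auto.
  unfold usubst in E. rewrite E. reflexivity.
Qed.

Lemma alpha_subst : forall (M : tm) (s s' : V -> tm),
  (forall v, alpha (s v) (s' v)) -> alpha (act M s) (act M s').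
Proof.
  induction M as [k|x|x A IHA M IHM|x A IHA M IHM|M IHM N IHN];
    intros s s' H; simpl.
  - constructor.
  - auto.
  - assert (Hy : Xs s (del (fv M) x) = Xs s' (del (fv M) x)).
    { unfold Xs. f_equal. apply flat_map_ext. intros a. apply alpha_fv; auto. }
    rewrite <- Hy. set (y := Xs s (del (fv M) x)).
    apply alpha_lam with (y := y); auto; try apply remove_In.
    unfold usubst. rewrite !act_comp. apply act_ext_fv. intros v Hv.
    unfold upd at 1 3. destruct (var_eq_dec V v x); auto. apply alpha_act; auto.
  - assert (Hy : Xs s (del (fv M) x) = Xs s' (del (fv M) x)).
    { unfold Xs. f_equal. apply flat_map_ext. intros a. apply alpha_fv; auto. }
    rewrite <- Hy. set (y := Xs s (del (fv M) x)).
    apply alpha_pi with (y := y); auto; try apply remove_In.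
    unfold usubst. rewrite !act_comp. apply act_ext_fv. intros v Hv.
    unfold upd at 1 3. destruct (var_eq_dec V v x); auto. apply alpha_act; auto.
  - constructor; auto.
Qed.


Lemma fresh2 (l1 l2 : list V) : exists y, ~ In y l1 /\ ~ In y l2.
Proof.
  exists (X' (l1 ++ l2)). split; intro H; apply (X'_fresh (l1 ++ l2)); apply in_or_app; auto.
Qed.

Lemma alpha_pi_intro (x x' : V) (A A' B B' : tm) :
  alpha A A' -> (forall P, usubst B x P = usubst B' x' P) -> alpha (tpi x A B) (tpi x' A' B').
Proof.
  intros Ha E. destruct (fresh2 (del (fv B) x) (del (fv B') x')) as [y [H1 H2]].
  apply alpha_pi with (y := y); auto.
Qed.

Lemma alpha_pi_inv (x : V) (A B N : tm) : alpha (tpi x A B) N ->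
  exists x' A' B', N = tpi x' A' B' /\ alpha A A' /\ forall P, usubst B x P = usubst B' x' P.
Proof.
  intros H. inversion H; subst. exists x', A', M'. split; auto. split; auto.
  eapply usubst_all; eauto.
Qed.

Lemma alpha_lam_inv (x : V) (A B N : tm) : alpha (tlam x A B) N ->
  exists x' A' B', N = tlam x' A' B' /\ alpha A A' /\ forall P, usubst B x P = usubst B' x' P.
Proof.
  intros H. inversion H; subst. exists x', A', M'. split; auto. split; auto.
  eapply usubst_all; eauto.
Qed.

Lemma alpha_c_inv k (N : tm) : alpha (tc k) N -> N = tc k.
Proof. intros H; inversion H; auto. Qed.
Lemma alpha_v_inv x (N : tm) : alpha (tv x) N -> N = tv x.
Proof. intros H; inversion H; auto. Qed.
Lemma alpha_app_inv (M N P : tm) : alpha (tapp M N) P ->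
  exists M1 N1, P = tapp M1 N1 /\ alpha M M1 /\ alpha N N1.
Proof. intros H; inversion H; subst; eauto. Qed.

Lemma bc_alpha (A B : tm) : alpha A B -> beta_conv A B.
Proof. intros H. apply rst_step. left. auto. Qed.
Lemma bc_sym (A B : tm) : beta_conv A B -> beta_conv B A.
Proof. apply rst_sym. Qed.
Lemma bc_trans (A B D : tm) : beta_conv A B -> beta_conv B D -> beta_conv A D.
Proof. apply rst_trans. Qed.

Lemma actx_dom (G D : @context V C) : alpha_ctx G D -> dom G = dom D.
Proof. induction 1 as [|p q G D [H1 H2] _ IH]; simpl; auto. rewrite H1, IH; auto. Qed.

Lemma actx_in (G D : @context V C) x A : alpha_ctx G D -> In (x, A) G ->
  exists A0, In (x, A0) D /\ alpha A A0.
Proof.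
  induction 1 as [|[x1 A1] [x2 A2] G D [H1 H2] _ IH]; simpl; intros Hin; [contradiction|].
  simpl in *. destruct Hin as [e|Hin].
  - inversion e; subst. exists A2; auto.
  - destruct (IH Hin) as [A0 [? ?]]. exists A0; auto.
Qed.

End Lemmas.

Scheme wf_mut := Induction for wf Sort Prop with typ_mut := Induction for typ Sort Prop.
Combined Scheme wf_typ_mut from wf_mut, typ_mut.

Section PTS2.
Context {V : Vars} {C : Type}.
Variable Ax : C -> C -> Prop.
Variable Rl : C -> C -> C -> Prop.
Notation tm := (term V C).

Lemma weaken : forall (G : @context V C) M A, typ Ax Rl G M A ->
  forall G', incl G G' -> wf Ax Rl G' -> typ Ax Rl G' M A.
Proof.
  induction 1; intros G' Hi Hw.
  - constructor; auto.
  - apply typ_var; auto.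
  - eapply typ_prod; eauto. intros y Hy. apply H2.
    + intro Hd. apply Hy. eapply incl_map; eauto.
    + intros p [e|Hp]; [left|right]; auto.
    + econstructor; eauto.
  - eapply typ_abs; eauto.
    + intros z Hz. apply H2.
      * intro Hd. apply Hz. eapply incl_map; eauto.
      * intros p [e|Hp]; [left|right]; auto.
      * econstructor; eauto.
    + intros z Hz. apply H4.
      * intro Hd. apply Hz. eapply incl_map; eauto.
      * intros p [e|Hp]; [left|right]; auto.
      * econstructor; eauto.
  - eapply typ_app; eauto.
  - eapply typ_conv; eauto.
Qed.

End PTS2.


Section Main.
Context {V : Vars} {C : Type}.
Variable Ax : C -> C -> Prop.
Variable Rl : C -> C -> C -> Prop.
Notation tm := (term V C).

Lemma main_mut :
  (forall (G : @context V C) (w : wf Ax Rl G), forall D, alpha_ctx G D -> wf Ax Rl D /\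
     forall x (A A' : tm), In (x, A) G -> alpha A A' -> exists s, typ Ax Rl D A' (tc s)) /\
  (forall (G : @context V C) M A (t : typ Ax Rl G M A), forall D M' A',
     alpha_ctx G D -> alpha M M' -> alpha A A' -> typ Ax Rl D M' A').
Proof.
  apply (@wf_typ_mut V C Ax Rl
    (fun G _ => forall D, alpha_ctx G D -> wf Ax Rl D /\
     forall x (A A' : tm), In (x, A) G -> alpha A A' -> exists s, typ Ax Rl D A' (tc s))
    (fun G M A _ => forall D M' A',
     alpha_ctx G D -> alpha M M' -> alpha A A' -> typ Ax Rl D M' A')).
  - intros D Hc. inversion Hc; subst. split; [constructor|]. intros ? ? ? [].
  - intros G x A s w IHw t IHt n D Hc. inversion Hc as [|[x1 A1] [x0 B0] G1 D0 [H1 H2] Hc0]; subst.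
    simpl in *. subst x0.
    destruct (IHw D0 Hc0) as [wD0 HD0].
    assert (wD : wf Ax Rl ((x, B0) :: D0)).
    { apply wf_cons with s; auto.
      - apply IHt; auto; apply alpha_refl.
      - rewrite <- (actx_dom _ _ Hc0). auto. }
    split; auto. intros x1 A1 A' [e|Hin] Ha.
    + inversion e; subst. exists s. apply weaken with D0; auto.
      apply IHt; auto. apply alpha_refl. apply incl_tl, incl_refl.
    + destruct (HD0 _ _ _ Hin Ha) as [s' Ht]. exists s'. apply weaken with D0; auto.
      apply incl_tl, incl_refl.
  - intros G s1 s2 w IHw a D M' A' Hc Hm Ha.
    apply alpha_c_inv in Hm. apply alpha_c_inv in Ha. subst.
    constructor; auto. apply (IHw D Hc).
  - intros G x A w IHw i D M' A' Hc Hm Ha. apply alpha_v_inv in Hm. subst.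
    destruct (actx_in _ _ _ _ Hc i) as [A0 [Hin0 Ha0]].
    destruct (IHw D Hc) as [wD HD]. destruct (HD x A A' i Ha) as [s Hs].
    eapply typ_conv; [apply typ_var; eauto| |exact Hs].
    apply bc_trans with A; [apply bc_sym|]; apply bc_alpha; auto.
  - intros G x A B s1 s2 s3 r t IHA t0 IHB D M' A' Hc Hm Ha.
    apply alpha_c_inv in Ha. subst.
    destruct (alpha_pi_inv _ _ _ _ Hm) as [x' [A1 [B1 [-> [HA1 EB]]]]].
    apply typ_prod with (s1 := s1) (s2 := s2); auto. apply IHA; auto. apply alpha_refl.
    intros z Hz. apply (IHB z).
    + rewrite (actx_dom _ _ Hc). auto.
    + constructor; auto.
    + rewrite (EB (tv z)). apply alpha_refl.
    + apply alpha_refl.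
  - intros G x y A B M s1 s2 s3 r t IHA t0 IHB t1 IHM D M' A' Hc Hm Ha.
    destruct (alpha_lam_inv _ _ _ _ Hm) as [x' [A1 [M1 [-> [HA1 EM]]]]].
    pose proof Ha as Ha'.
    destruct (alpha_pi_inv _ _ _ _ Ha) as [y' [A2 [B2 [-> [HA2 EB]]]]].
    assert (Hd : forall z, ~ In z (dom D) -> ~ In z (dom G)).
    { intros z Hz. rewrite (actx_dom _ _ Hc). auto. }
    apply typ_conv with (A := tpi y' A1 B2) (s := s3).
    + apply typ_abs with (s1 := s1) (s2 := s2) (s3 := s3); auto.
      * apply IHA; auto. apply alpha_refl.
      * intros z Hz. apply (IHB z (Hd z Hz)); auto. constructor; auto.
        rewrite (EB (tv z)). apply alpha_refl. apply alpha_refl.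
      * intros z Hz. apply (IHM z (Hd z Hz)); auto. constructor; auto.
        rewrite (EM (tv z)). apply alpha_refl. rewrite (EB (tv z)). apply alpha_refl.
    + apply bc_trans with (tpi y A B); [apply bc_sym|]; apply bc_alpha; auto.
      apply alpha_pi_intro; auto.
    + apply typ_prod with (s1 := s1) (s2 := s2); auto.
      * apply IHA; auto. apply alpha_refl.
      * intros z Hz. apply (IHB z (Hd z Hz)); auto. constructor; auto.
        rewrite (EB (tv z)). apply alpha_refl. apply alpha_refl.
  - intros G M N x A B s t IHM t0 IHN t1 IHB D M' A' Hc Hm Ha.
    destruct (alpha_app_inv _ _ _ Hm) as [M1 [N1 [-> [HM1 HN1]]]].
    assert (Hsub : alpha (usubst B x N) (usubst B x N1)).
    { unfold usubst. apply alpha_subst. intros v. unfold upd.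
      destruct (var_eq_dec V v x); auto. apply alpha_refl. }
    apply typ_conv with (A := usubst B x N1) (s := s).
    + apply typ_app with (A := A) (s := s).
      * apply IHM; auto. apply alpha_refl.
      * apply IHN; auto. apply alpha_refl.
      * apply IHB; auto. apply alpha_refl.
    + apply bc_trans with (usubst B x N); [apply bc_sym|]; apply bc_alpha; auto.
    + apply IHB; auto. apply alpha_refl.
  - intros G M A B s t IHM b t0 IHB D M' A' Hc Hm Ha.
    apply typ_conv with (A := A) (s := s).
    + apply IHM; auto. apply alpha_refl.
    + apply bc_trans with B; auto. apply bc_alpha; auto.
    + apply IHB; auto. apply alpha_refl.
Qed.

End Main.

Theorem mainTheorem15 (V : Vars) (C : Type)
  (Ax : C -> C -> Prop) (Rl : C -> C -> C -> Prop)
  (G D : @context V C) (M A B : term V C) :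
  alpha_ctx G D -> alpha A B -> typ Ax Rl G M A -> typ Ax Rl D M B.
Proof.
  intros Hc Ha Ht. apply (proj2 (main_mut Ax Rl) G M A Ht D M B Hc (alpha_refl M) Ha).
Qed.
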